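(* Let $P=P(G,[\omega])$ be a toric poset over $V$, and let $S\subseteq V$ be nonempty and either a toric interval $[i,j]^{\mathrm{tor}}$ of $P$ or a geometric toric antichain of $P$. Then the partition $\pi_S=\{S\}\cup\{\{v\}:v\in V\setminus S\}$ is closed with respect to $P$; that is, contracting $S$ defines a toric (quotient) morphism.
   Context: Toric poset setup: $V=[n]$; $\mathrm{Acyc}(G)$ acyclic orientations; $[\omega]$ the class under the equivalence generated by converting a source into a sink; toric chambers (components of $\mathbb{R}^V/\mathbb{Z}^V$ minus the hyperplanes $\{x_i\equiv x_j\bmod 1\}$, $\{i,j\}\in E$) correspond bijectively to classes $[\omega]$; $P(G,[\omega])$ is identified with its chamber $c(P)$. $D_\pi$, $D^{\mathrm{tor}}_\pi$ as usual ($x_i=x_j$ for $i,j$ in common blocks). Toric closure $\mathrm{cl}^{\mathrm{tor}}_P(\pi)$: coarsest $\bar\pi\ge\pi$ with $\overline{c(P)}\cap D^{\mathrm{tor}}_{\bar\pi}=\overline{c(P)}\cap D^{\mathrm{tor}}_\pi$; closed means $\pi=\mathrm{cl}^{\mathrm{tor}}_P(\pi)$; toric quotient morphisms are projections onto $D^{\mathrm{tor}}_\pi$ for closed $\pi$. Toric chain: $C=\{i_1,\dots,i_m\}$ with a cyclic class $[(i_1,\dots,i_m)]$ such that every $x\in c(P)$ (coordinates in $[0,1)$) has a cyclic shift $(j_1,\dots,j_m)$ with $0\le x_{j_1}<\dots<x_{j_m}<1$; $P|_C$ denotes this class. Toric interval: $[i,i]^{\mathrm{tor}}=\{i\}$;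 for $i\neq j$, empty if $\{i,j\}$ is not a toric chain, else $\{i,j\}\cup\{k:P|_{\{i,j,k\}}=[(i,k,j)]\}$. Geometric toric antichain: $A\subseteq V$ such that $D^{\mathrm{tor}}_{\pi_A}$ intersects the open chamber $c(P)$. *)

(* Defs.v *)
From mathcomp Require Import all_boot.
From Stdlib Require Import Reals Relation_Operators.

Set Implicit Arguments.
Unset Strict Implicit.

Local Open Scope R_scope.

Section TorDefs.
Variable n : nat.
Notation V := ('I_n).

(* A point of R^V; the torus R^V/Z^V is handled through Z^V-periodic
   subsets of R^V (lifts). *)
Definition pt := V -> R.

Definition is_int (r : R) : Prop := exists k : Z, r = IZR k.

Definition simple_graph (E : V -> V -> Prop) : Prop :=
  (forall i j, E i j -> E j i) /\ (forall i, ~ E i i).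

Definition acyc_orient (E om : V -> V -> Prop) : Prop :=
  (forall i j, om i j -> E i j) /\
  (forall i j, E i j -> (om i j \/ om j i)) /\
  (forall i j, om i j -> ~ om j i) /\
  (forall i, ~ clos_trans V om i i).

Definition avoid (E : V -> V -> Prop) (x : pt) : Prop :=
  forall i j, E i j -> ~ is_int (x i - x j).

(* x and y (mod Z^V) lie in the same connected (= path) component of the
   complement of the toric arrangement: a continuous path in R^V from x to
   a lift of y avoiding the (lifted) hyperplanes. *)
Definition same_comp (E : V -> V -> Prop) (x y : pt) : Prop :=
  exists g : R -> pt,
    (forall i, continuity (fun t => g t i)) /\
    (forall i, g 0 i = x i) /\
    (forall i, is_int (g 1 i - y i)) /\
    (forall t, 0 <= t <= 1 -> avoid E (g t)).

(* Lift to R^V of the toric chamber c(P) of P = P(G,[omega]): the component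
   of the complement containing the image of the points of the open unit
   cube lying in the graphic chamber of omega. *)
Definition tchamber (E om : V -> V -> Prop) (x : pt) : Prop :=
  avoid E x /\
  exists y : pt, (forall i, 0 < y i < 1) /\
                 (forall i j, om i j -> y i < y j) /\
                 same_comp E y x.

Definition in_closure (E om : V -> V -> Prop) (x : pt) : Prop :=
  forall eps, 0 < eps ->
    exists y, tchamber E om y /\ forall i, Rabs (x i - y i) < eps.

Definition is_partition (p : V -> V -> Prop) : Prop :=
  (forall i, p i i) /\ (forall i j, p i j -> p j i) /\
  (forall i j k, p i j -> p j k -> p i k).

Definition coarser (p q : V -> V -> Prop) : Prop := forall i j, p i j -> q i j.

Definition Dtor (p : V -> V -> Prop) (x : pt) : Prop :=
  forall i j, p i j -> is_int (x i - x j).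

Definition tor_closed (E om : V -> V -> Prop) (p : V -> V -> Prop) : Prop :=
  forall q, is_partition q -> coarser p q ->
    (forall x, (in_closure E om x /\ Dtor q x) <-> (in_closure E om x /\ Dtor p x)) ->
    forall i j, q i j -> p i j.

Definition piS (S : V -> Prop) : V -> V -> Prop :=
  fun i j => i = j \/ (S i /\ S j).

Fixpoint incr (x : pt) (l : seq V) : Prop :=
  match l with
  | a :: ((b :: _) as l') => x a < x b /\ incr x l'
  | _ => True
  end.

(* Toric chain C = elements of l with P|_C = [l] (cyclic class of l). *)
Definition tchain (E om : V -> V -> Prop) (l : seq V) : Prop :=
  uniq l /\
  forall x, tchamber E om x -> (forall v, 0 <= x v < 1) ->
    exists r, (r < size l)%nat /\ incr x (rot r l).

Definition tinterval (E om : V -> V -> Prop) (i j : V) (k : V) : Prop :=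
  (i = j /\ k = i) \/
  (i <> j /\ tchain E om [:: i; j] /\
     (k = i \/ k = j \/ (k <> i /\ k <> j /\ tchain E om [:: i; k; j]))).

Definition geom_antichain (E om : V -> V -> Prop) (A : V -> Prop) : Prop :=
  exists x, tchamber E om x /\ Dtor (piS A) x.

End TorDefs.

(* Main.v *)
Require Import Defs.
From mathcomp Require Import all_boot.
From Stdlib Require Import Reals Relation_Operators Lra Lia Classical ClassicalEpsilon.
Set Implicit Arguments.
Unset Strict Implicit.

Local Open Scope R_scope.

Lemma is_int_add a b : is_int a -> is_int b -> is_int (a+b).
Proof. intros [k ->] [l ->]; exists (k+l)%Z; now rewrite plus_IZR. Qed.
Lemma is_int_opp a : is_int a -> is_int (-a).
Proof. intros [k ->]; exists (-k)%Z; now rewrite opp_IZR. Qed.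
Lemma is_int_sub a b : is_int a -> is_int b -> is_int (a-b).
Proof. intros Ha Hb; unfold Rminus; apply is_int_add; auto; apply is_int_opp; auto. Qed.
Lemma is_int_0 : is_int 0.
Proof. exists 0%Z; reflexivity. Qed.
Lemma is_int_eq a b : a = b -> is_int a -> is_int b.
Proof. intros ->; auto. Qed.

Lemma window_noint c u v : c <= u < c+1 -> c <= v < c+1 -> u <> v -> ~ is_int (u - v).
Proof.
  intros Hu Hv Hne [k Hk].
  assert (H1 : IZR k < 1) by lra. assert (H2 : IZR (-1) < IZR k) by (simpl; lra).
  apply lt_IZR in H1; apply lt_IZR in H2. assert (k = 0%Z) by lia. subst k. simpl in Hk. lra.
Qed.

Lemma cabs (f : R -> R) : continuity f -> continuity (fun t => Rabs (f t)).
Proof. intro H. apply (continuity_comp f Rabs H Rcontinuity_abs). Qed.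

Definition ming (t : R) := (2*t + 1 - Rabs (2*t-1))/2.
Definition maxg (t : R) := (2*t - 1 + Rabs (2*t-1))/2.

Lemma ming_cont : continuity ming.
Proof.
unfold ming, Rdiv.
apply (continuity_mult (fun t => 2*t + 1 - Rabs (2*t-1)) (fun _ => /2)); [|apply continuity_const; intros ??; reflexivity].
apply (continuity_minus (fun t => 2*t + 1) (fun t => Rabs (2*t-1))).
reg. apply cabs. reg.
Qed.
Lemma maxg_cont : continuity maxg.
Proof.
unfold maxg, Rdiv.
apply (continuity_mult (fun t => 2*t - 1 + Rabs (2*t-1)) (fun _ => /2)); [|apply continuity_const; intros ??; reflexivity].
apply (continuity_plus (fun t => 2*t - 1) (fun t => Rabs (2*t-1))).
reg. apply cabs. reg.
Qed.

Lemma mm_lo t : t <= 1/2 -> ming t = 2*t /\ maxg t = 0.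
Proof. intro H; unfold ming, maxg; rewrite Rabs_left1; [split; lra|lra]. Qed.
Lemma mm_hi t : 1/2 <= t -> ming t = 1 /\ maxg t = 2*t-1.
Proof. intro H; unfold ming, maxg; rewrite Rabs_right; [split; lra|lra]. Qed.

Lemma conv_window s c d a b : 0 <= s <= 1 -> c <= a < c+1 -> d <= b < d+1 ->
  (1-s)*c+s*d <= (1-s)*a + s*b < (1-s)*c + s*d + 1.
Proof. intros Hs Ha Hb.
  assert (0 <= (1-s)*(a-c)) by (apply Rmult_le_pos; lra).
  assert (0 <= s*(b-d)) by (apply Rmult_le_pos; lra).
  split; [nra|].
  destruct (Rlt_or_le s 1) as [H1|H1].
  - assert (0 < (1-s)*(c+1-a)) by (apply Rmult_lt_0_compat; lra).
    assert (0 <= s*(d+1-b)) by (apply Rmult_le_pos; lra). nra.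
  - assert (s = 1) by lra. subst s. lra.
Qed.

Lemma conv_lt s a1 a2 b1 b2 : 0 <= s <= 1 -> a1 < a2 -> b1 < b2 -> (1-s)*a1 + s*b1 < (1-s)*a2 + s*b2.
Proof. intros Hs Ha Hb.
  destruct (Rlt_or_le s 1) as [H1|H1].
  - assert (0 < (1-s)*(a2-a1)) by (apply Rmult_lt_0_compat; lra).
    assert (0 <= s*(b2-b1)) by (apply Rmult_le_pos; lra). nra.
  - assert (s = 1) by lra. subst s. lra.
Qed.

Section Aux.
Variable n : nat.
Notation V := ('I_n).

Lemma avoid_ne (E om : V -> V -> Prop) (x : pt n) u v : tchamber E om x -> E u v -> x u <> x v.
Proof. intros [Hav _] Huv Heq. apply (Hav u v Huv). rewrite Heq. apply is_int_eq with 0; [ring|apply is_int_0]. Qed.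

Lemma chamber_move (E om : V -> V -> Prop) (z w : pt n) c d :
  tchamber E om z -> (forall v, c <= z v < c+1) -> (forall v, d <= w v < d+1) ->
  (forall u v, z u < z v -> w u < w v) -> tchamber E om w.
Proof.
  intros Hz Wz Ww Hord.
  assert (Hne : forall u v, E u v -> w u <> w v).
  { intros u v Euv. pose proof (avoid_ne Hz Euv).
    destruct (Rtotal_order (z u) (z v)) as [H1|[H1|H1]].
    - apply Hord in H1; lra. - contradiction. - apply Hord in H1; lra. }
  split.
  { intros u v Euv. apply (window_noint (Ww u) (Ww v)); auto. }
  pose proof Hz as Hz0.
  destruct Hz as [Hav [y [Hy1 [Hy2 [g [Hgc [Hg0 [Hg1 Hgav]]]]]]]].
  exists y; split; [auto|split; [auto|]].
  exists (fun t i => g (ming t) i + maxg t * (w i - z i)).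
  split; [|split; [|split]].
  - intros i.
    apply (continuity_plus (fun t => g (ming t) i) (fun t => maxg t * (w i - z i))).
    apply (continuity_comp ming (fun s => g s i) ming_cont (Hgc i)).
    apply (continuity_mult maxg (fun _ => w i - z i) maxg_cont).
    apply continuity_const; intros ??; reflexivity.
  - intros i. destruct (@mm_lo 0) as [H1 H2]; [lra|]. rewrite H2.
    replace (ming 0) with 0 by lra. rewrite Hg0; ring.
  - intros i. destruct (@mm_hi 1) as [H1 H2]; [lra|]. rewrite H1 H2.
    apply is_int_eq with (g 1 i - z i); [ring|]. apply Hg1.
  - intros t Ht u v Euv.
    destruct (Rle_or_lt t (1/2)) as [Hl|Hl].
    + destruct (mm_lo Hl) as [H1 H2]. rewrite H1 H2.
      replace (g (2 * t) u + 0 * (w u - z u) - (g (2 * t) v + 0 * (w v - z v)))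
        with (g (2*t) u - g (2*t) v) by ring.
      apply (Hgav (2*t)); [lra|auto].
    + destruct (mm_hi (Rlt_le _ _ Hl)) as [H1 H2]. rewrite H1 H2.
      set s := 2*t - 1. assert (Hs : 0 <= s <= 1) by (unfold s; lra).
      intro Hint.
      assert (Hi : is_int (((1-s)*z u + s * w u) - ((1-s)*z v + s*w v))).
      { apply is_int_eq with ((g 1 u + s * (w u - z u) - (g 1 v + s * (w v - z v)))
              - ((g 1 u - z u) - (g 1 v - z v))); [ring|].
        apply is_int_sub; auto. apply is_int_sub; apply Hg1. }
      revert Hi.
      apply (window_noint (conv_window Hs (Wz u) (Ww u)) (conv_window Hs (Wz v) (Ww v))).
      pose proof (avoid_ne Hz0 Euv).
      destruct (Rtotal_order (z u) (z v)) as [H3|[H3|H3]].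
      * pose proof (conv_lt Hs H3 (Hord _ _ H3)). lra.
      * contradiction.
      * pose proof (conv_lt Hs H3 (Hord _ _ H3)). lra.
Qed.

Lemma chamber_shift (E om : V -> V -> Prop) (x z : pt n) :
  tchamber E om x -> (forall v, is_int (z v - x v)) -> tchamber E om z.
Proof.
  intros [Hav [y [Hy1 [Hy2 [g [Hgc [Hg0 [Hg1 Hgav]]]]]]]] Hzx.
  split.
  { intros u v Euv Hi. apply (Hav u v Euv).
    apply is_int_eq with ((z u - z v) - (z u - x u) + (z v - x v)); [ring|].
    apply is_int_add; auto. apply is_int_sub; auto. }
  exists y; split; [auto|split; [auto|]].
  exists g; split; [auto|split;[auto|split;[|auto]]].
  intros i. apply is_int_eq with ((g 1 i - x i) - (z i - x i)); [ring|]. apply is_int_sub; auto.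
Qed.

Lemma closure_chamber (E om : V -> V -> Prop) x : tchamber E om x -> in_closure E om x.
Proof. intros H eps Heps. exists x; split; auto. intros i. rewrite Rminus_diag Rabs_R0. auto. Qed.

End Aux.

Local Open Scope R_scope.
Section Aux2.
Variable n : nat.
Notation V := ('I_n).
Lemma fin_min (f : V -> R) : (forall v, 0 < f v) -> exists e, 0 < e /\ forall v, e <= f v.
Proof.
  intros Hf.
  assert (H : forall l : seq V, exists e, 0 < e /\ forall v, v \in l -> e <= f v).
  { elim => [|a l [e [He IH]]].
    - exists 1; split; [lra|]. by [].
    - exists (Rmin e (f a)); split; [apply Rmin_pos; auto|].
      move=> v; rewrite in_cons => /orP [/eqP ->|Hv]; [apply Rmin_r|].
      apply Rle_trans with e; [apply Rmin_l|auto]. }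
  destruct (H (enum 'I_n)) as [e [He H2]]. exists e; split; auto.
  intros v; apply H2. by rewrite mem_enum.
Qed.

Definition cnt (om : V -> V -> Prop) (v : V) : nat :=
  (\sum_(w < n) (if excluded_middle_informative (clos_trans V om w v) then 1 else 0))%nat.

Lemma cnt_le om v : (cnt om v <= n)%nat.
Proof.
  rewrite /cnt. apply: (@leq_trans (\sum_(w < n) 1)%nat).
  apply: leq_sum => i _. by case: excluded_middle_informative.
  by rewrite sum1_card card_ord.
Qed.

Lemma cnt_lt om u v : (forall i, ~ clos_trans V om i i) -> om u v -> (cnt om u < cnt om v)%nat.
Proof.
  move=> Hac Huv. rewrite /cnt (bigD1 u) //= [X in (_ < X)%nat](bigD1 u) //=.
  destruct (excluded_middle_informative (clos_trans V om u u)) as [H|H0]; first by case: (Hac u).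
  destruct (excluded_middle_informative (clos_trans V om u v)) as [H1|H]; last by case: H; apply t_step.
  rewrite add0n add1n ltnS. apply: leq_sum => i _.
  destruct (excluded_middle_informative (clos_trans V om i u)) as [H|H5] => //.
  destruct (excluded_middle_informative (clos_trans V om i v)) as [H3|H2] => //.
  case: H2. by apply (t_trans _ _ _ u) => //; apply t_step.
Qed.

Lemma chamber_exists (E om : V -> V -> Prop) : acyc_orient E om -> exists y : pt n, tchamber E om y.
Proof.
  move=> [Hoe [Heo [Has Hac]]].
  pose y := fun v => INR (cnt om v).+1 / INR n.+2.
  have Hd : 0 < INR n.+2 by apply lt_0_INR; lia.
  have Hy : forall v, 0 < y v < 1.
  { move=> v; rewrite /y; split.
    - apply Rdiv_lt_0_compat; auto. apply lt_0_INR; lia.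
    - apply Rmult_lt_reg_r with (INR n.+2); auto. unfold Rdiv. rewrite Rmult_assoc Rinv_l; [|lra].
      rewrite Rmult_1_r Rmult_1_l. apply lt_INR. have := cnt_le om v. move/leP. lia. }
  have Hm : forall u v, om u v -> y u < y v.
  { move=> u v Huv; rewrite /y. unfold Rdiv. apply Rmult_lt_compat_r; [apply Rinv_0_lt_compat; auto|].
    apply lt_INR. have := cnt_lt Hac Huv. move/ltP. lia. }
  exists y. split.
  - move=> u v Euv. apply (@window_noint 0); [have := Hy u; lra|have := Hy v; lra|].
    case: (Heo u v Euv) => H; have := Hm _ _ H; lra.
  - exists y; split; [auto|split; [auto|]].
    exists (fun _ => y); split; [|split; [|split]].
    + move=> i; apply continuity_const; intros ??; reflexivity.
    + by [].
    + move=> i; apply is_int_eq with 0; [ring|apply is_int_0].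
    + move=> t _ u v Euv. apply (@window_noint 0); [have := Hy u; lra|have := Hy v; lra|].
      case: (Heo u v Euv) => H; have := Hm _ _ H; lra.
Qed.
End Aux2.

Local Open Scope R_scope.
Section Aux3.
Variable n : nat.
Notation V := ('I_n).

Lemma window_rep (x : pt n) c : exists z : pt n, (forall v, c <= z v < c+1) /\ (forall v, is_int (z v - x v)).
Proof.
  exists (fun v => x v - IZR (up (x v - c) - 1)). split.
  - move=> v. rewrite minus_IZR. have := archimed (x v - c). simpl. lra.
  - move=> v. exists (- (up (x v - c) - 1))%Z. rewrite opp_IZR. ring.
Qed.

Lemma antichain_key (E om : V -> V -> Prop) (S : V -> Prop) a b :
  geom_antichain E om S -> ~ S a -> a <> b ->
  exists X : pt n, in_closure E om X /\ Dtor (piS S) X /\ ~ is_int (X a - X b).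
Proof.
  move=> [x [Hx HD]] Ha Hab.
  set c := x a.
  have [z [Wz Iz]] := window_rep x c.
  have Hz : tchamber E om z := chamber_shift Hx Iz.
  have Hpos : forall v, 0 < (if Rlt_dec (z a) (z v) then z v - z a else 1).
  { move=> v. case: (Rlt_dec (z a) (z v)) => H /=; lra. }
  have [e [He Hf]] := @fin_min n (fun v => if Rlt_dec (z a) (z v) then z v - z a else 1) Hpos.
  have Wa := Wz a.
  set eta := Rmin e (c + 1 - z a) / 2.
  have Heta : 0 < eta by (unfold eta; have := Rmin_pos e (c+1 - z a) He ltac:(lra); lra).
  have Heta1 : eta < e by (unfold eta; have := Rmin_l e (c+1 - z a); lra).
  have Heta2 : eta < c + 1 - z a by (unfold eta; have := Rmin_r e (c+1 - z a); lra).
  pose X := fun v => if v == a then z a + eta else z v.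
  have Xa : X a = z a + eta by rewrite /X eqxx.
  have Xo : forall v, v <> a -> X v = z v by move=> v Hv; rewrite /X; case: eqP.
  have Hgap : forall v, z a < z v -> eta < z v - z a.
  { move=> v Hv. have := Hf v. case: Rlt_dec => H /=; lra. }
  have WX : forall v, c <= X v < c + 1.
  { move=> v. case: (eqVneq v a) => [->|Hv]; [rewrite Xa; lra|rewrite Xo; [apply Wz|by apply/eqP]]. }
  have HX : tchamber E om X.
  { apply (chamber_move Hz Wz WX). move=> u v Huv.
    case: (eqVneq u a) => [Eu|Hu]; case: (eqVneq v a) => [Ev|Hv].
    - subst; lra.
    - subst u. rewrite Xa Xo; [|by apply/eqP]. have := Hgap v Huv. lra.
    - subst v. rewrite Xa Xo; [|by apply/eqP]. lra.
    - rewrite !Xo; [lra|by apply/eqP|by apply/eqP]. }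
  exists X. split; [by apply closure_chamber|split].
  - move=> u v [->|[Su Sv]]; first by apply is_int_eq with 0; [ring|apply is_int_0].
    have Hu : u <> a by move=> H; apply Ha; rewrite -H.
    have Hv : v <> a by move=> H; apply Ha; rewrite -H.
    rewrite !Xo //.
    apply is_int_eq with ((z u - x u) + (x u - x v) - (z v - x v)); [ring|].
    apply is_int_sub; [apply is_int_add|]; auto. apply HD; right; auto.
  - apply (window_noint (WX a) (WX b)). rewrite Xa Xo; last by move=> H; apply Hab.
    have := Hgap b. have := Wz b. move=> H1 H2 H3.
    destruct (Rle_or_lt (z b) (z a)) as [H|H]; [lra|]. have := H2 H. lra.
Qed.
End Aux3.

Local Open Scope R_scope.

Lemma conv_le s a1 a2 b1 b2 : 0 <= s <= 1 -> a1 <= a2 -> b1 <= b2 -> (1-s)*a1 + s*b1 <= (1-s)*a2 + s*b2.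
Proof. intros Hs Ha Hb.
  assert (0 <= (1-s)*(a2-a1)) by (apply Rmult_le_pos; lra).
  assert (0 <= s*(b2-b1)) by (apply Rmult_le_pos; lra). nra.
Qed.
Lemma cv_up_lt s a b M : 0 <= s <= 1 -> a < M -> b < M -> (1-s)*a + s*b < M.
Proof. intros Hs Ha Hb. have := conv_lt Hs Ha Hb. lra. Qed.
Lemma cv_up_le s a b M : 0 <= s <= 1 -> a <= M -> b <= M -> (1-s)*a + s*b <= M.
Proof. intros Hs Ha Hb. have := conv_le Hs Ha Hb. lra. Qed.
Lemma cv_lo_lt s a b m : 0 <= s <= 1 -> m < a -> m < b -> m < (1-s)*a + s*b.
Proof. intros Hs Ha Hb. have := conv_lt Hs Ha Hb. lra. Qed.
Lemma cv_lo_le s a b m : 0 <= s <= 1 -> m <= a -> m <= b -> m <= (1-s)*a + s*b.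
Proof. intros Hs Ha Hb. have := conv_le Hs Ha Hb. lra. Qed.

Section Aux4.
Variable n : nat.
Notation V := ('I_n).

Lemma collapse_key (E om : V -> V -> Prop) (S : V -> Prop) (z : pt n) c zj a b :
  tchamber E om z -> (forall v, c <= z v < c+1) -> c < zj -> zj < c + 1 ->
  (forall s, S s -> z s <= zj) -> ~ S a -> (z a = c \/ zj <= z a) -> a <> b ->
  exists X : pt n, in_closure E om X /\ Dtor (piS S) X /\ ~ is_int (X a - X b).
Proof.
  move=> Hz Wz Hc1 Hc2 HS Ha Hza Hab.
  have Wa := Wz a.
  have [d [Hd0 [Hd1 Hd]]] : exists d, 0 <= d /\ c <= z a - d /\
     ((d = 0 /\ (z a = c \/ z a = zj)) \/ (0 < d /\ zj < z a - d /\ forall u, z u < z a -> z u < z a - d)).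
  { case: (Rle_lt_dec (z a) zj) => Hle.
    - exists 0; split; [lra|split; [lra|left; split; [done|lra]]].
    - have Hpos : forall v, 0 < (if Rlt_dec (z v) (z a) then z a - z v else 1).
      { move=> v. case: (Rlt_dec (z v) (z a)) => H /=; lra. }
      have [e [He Hf]] := @fin_min n _ Hpos.
      set d := Rmin e (z a - zj) / 2.
      have Hd0 : 0 < d by (unfold d; have := Rmin_pos e (z a - zj) He ltac:(lra); lra).
      have Hd1 : d < e by (unfold d; have := Rmin_l e (z a - zj); lra).
      have Hd2 : d < z a - zj by (unfold d; have := Rmin_r e (z a - zj); lra).
      exists d; split; [lra|split; [lra|right; split; [lra|split; [lra|]]]].
      move=> u Hu. have := Hf u. case: Rlt_dec => H /=; lra. }
  set p := (c + zj) / 2.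
  have Hp1 : c < p by (unfold p; lra).
  have Hp2 : p < zj by (unfold p; lra).
  pose X := fun v => if v == a then z a - d else if Rle_dec (z v) zj then p else z v.
  have Xa : X a = z a - d by rewrite /X eqxx.
  have XC : forall v, v <> a -> z v <= zj -> X v = p.
  { move=> v Hv Hle; rewrite /X; case: eqP => // _. by case: Rle_dec. }
  have XN : forall v, v <> a -> zj < z v -> X v = z v.
  { move=> v Hv Hlt; rewrite /X; case: eqP => // _. case: Rle_dec => //= H; lra. }
  have WX : forall v, c <= X v < c + 1.
  { move=> v. case: (eqVneq v a) => [->|/eqP Hv]; first (rewrite Xa; lra).
    case: (Rle_lt_dec (z v) zj) => H; [rewrite XC //; lra|rewrite XN //; apply Wz]. }
  exists X; split; [|split].
  - move=> eps Heps.
    set s := Rmin 1 (eps/2).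
    have Hs : 0 < s <= 1 by (unfold s; split; [apply Rmin_pos; lra|apply Rmin_l]).
    have Hs2 : s <= eps / 2 by apply Rmin_r.
    have Hs' : 0 <= s <= 1 by lra.
    pose w := fun v => if v == a then z a - d else if Rle_dec (z v) zj then (1-s)*p + s * z v else z v.
    have wa : w a = z a - d by rewrite /w eqxx.
    have wC : forall v, v <> a -> z v <= zj -> w v = (1-s)*p + s * z v.
    { move=> v Hv Hle; rewrite /w; case: eqP => // _. by case: Rle_dec. }
    have wN : forall v, v <> a -> zj < z v -> w v = z v.
    { move=> v Hv Hlt; rewrite /w; case: eqP => // _. case: Rle_dec => //= H; lra. }
    have Ww : forall v, c <= w v < c + 1.
    { move=> v. case: (eqVneq v a) => [->|/eqP Hv]; first (rewrite wa; lra).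
      case: (Rle_lt_dec (z v) zj) => H; [rewrite wC //|rewrite wN //; apply Wz].
      have := Wz v. move=> [H1 H2]. split.
      apply cv_lo_le; auto; lra. apply cv_up_lt; auto; lra. }
    exists w; split.
    + apply (chamber_move Hz Wz Ww). move=> u v Huv.
      have Wu := Wz u. have Wv := Wz v.
      case: (eqVneq u a) => [Eu|/eqP Hu]; case: (eqVneq v a) => [Ev|/eqP Hv].
      * subst; lra.
      * subst u. rewrite wa. case: (Rle_lt_dec (z v) zj) => H.
        -- rewrite wC //. have Hzc : z a = c by (case: Hd => [[_ [//|H2]]|[Hd4 [H2 _]]]; lra).
           have := cv_lo_lt Hs' Hp1 (ltac:(lra) : c < z v). lra.
        -- rewrite wN //. lra.
      * subst v. rewrite wa. case: (Rle_lt_dec (z u) zj) => H.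
        -- rewrite wC //. case: Hd => [[Hd3 [H2|H2]]|[Hd4 [H2 _]]].
           ++ lra.
           ++ have := cv_up_lt Hs' Hp2 (ltac:(lra) : z u < zj). lra.
           ++ have := cv_up_le Hs' (Rlt_le _ _ Hp2) H. lra.
        -- rewrite wN //. case: Hd => [[Hd3 [H2|H2]]|[Hd4 [H2 H3]]].
           ++ lra.
           ++ lra.
           ++ by apply H3.
      * case: (Rle_lt_dec (z u) zj) => H; case: (Rle_lt_dec (z v) zj) => H'.
        -- rewrite !wC //. have : s * z u < s * z v by apply Rmult_lt_compat_l; lra. lra.
        -- rewrite wC // wN //. have := cv_up_le Hs' (Rlt_le _ _ Hp2) H. lra.
        -- lra.
        -- rewrite !wN //.
    + move=> v. case: (eqVneq v a) => [->|/eqP Hv]; first by rewrite wa Xa Rminus_diag Rabs_R0.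
      case: (Rle_lt_dec (z v) zj) => H; last by rewrite wN // XN // Rminus_diag Rabs_R0.
      rewrite wC // XC //.
      replace (p - ((1 - s) * p + s * z v)) with (s * (p - z v)) by ring.
      rewrite Rabs_mult (Rabs_pos_eq s); [|lra].
      have : Rabs (p - z v) < 1 by (apply Rabs_def1; have := Wz v; lra).
      move=> H1. have : s * Rabs (p - z v) <= s * 1 by apply Rmult_le_compat_l; lra. lra.
  - move=> u v [->|[Su Sv]]; first by apply is_int_eq with 0; [ring|apply is_int_0].
    have Hu : u <> a by move=> H; apply Ha; rewrite -H.
    have Hv : v <> a by move=> H; apply Ha; rewrite -H.
    rewrite !XC //; try (apply HS; auto).
    apply is_int_eq with 0; [ring|apply is_int_0].
  - apply (window_noint (WX a) (WX b)). rewrite Xa.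
    have Hb : b <> a by move=> H; apply Hab; rewrite H.
    case: (Rle_lt_dec (z b) zj) => H.
    + rewrite XC //. case: Hd => [[Hd3 [H2|H2]]|[Hd4 [H2 _]]]; lra.
    + rewrite XN //. case: Hd => [[Hd3 [H2|H2]]|[Hd4 [H2 H3]]]; try lra.
      case: (Rlt_le_dec (z b) (z a)) => H4; [have := H3 b H4; lra|lra].
Qed.
End Aux4.

Local Open Scope R_scope.

Section Aux5.
Variable n : nat.
Notation V := ('I_n).

Lemma interval_key (E om : V -> V -> Prop) (S : V -> Prop) i j a b :
  (forall k, S k <-> tinterval E om i j k) -> i <> j -> tchain E om [:: i; j] -> ~ S a -> a <> b ->
  exists X : pt n, in_closure E om X /\ Dtor (piS S) X /\ ~ is_int (X a - X b).
Proof.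
  move=> HSi Hij Htc Ha Hab.
  have Si : S i by apply HSi; right; split; [|split; [|left]].
  have Sj : S j by apply HSi; right; split; [|split; [|right; left]].
  have Hai : a <> i by move=> H; apply Ha; rewrite H.
  have Haj : a <> j by move=> H; apply Ha; rewrite H.
  have Hnt : ~ tchain E om [:: i; a; j].
  { move=> H. apply Ha. apply HSi. right. split; first done. split; first done.
    right. right. split; first done. split; done. }
  have Hu : uniq [:: i; a; j].
  { rewrite /= !inE !negb_or. apply/and3P; split; [apply/andP; split|apply/eqP; auto|done]; apply/eqP; auto. }
  have [x [Hx [H01 Hno]]] : exists x, tchamber E om x /\ (forall v, 0 <= x v < 1) /\
      ~ (exists r, (r < size [:: i; a; j])%nat /\ incr x (rot r [:: i; a; j])).
  { apply NNPP => H. apply Hnt. split; auto. move=> x Hx H01. apply NNPP => Hn. apply H. exists x; auto. }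
  have H0 : ~ (x i < x a /\ x a < x j).
  { move=> [h1 h2]; apply Hno; exists 0%nat; split; [done|simpl; tauto]. }
  have H1 : ~ (x a < x j /\ x j < x i).
  { move=> [h1 h2]; apply Hno; exists 1%nat; split; [done|simpl; tauto]. }
  have H2 : ~ (x j < x i /\ x i < x a).
  { move=> [h1 h2]; apply Hno; exists 2%nat; split; [done|simpl; tauto]. }
  have Hxij : x i < x j \/ x j < x i.
  { have [r [Hr Hinc]] := proj2 Htc x Hx H01.
    destruct r as [|[|r]]; simpl in Hinc; try tauto. }
  have HSx : forall s, S s -> s = i \/ s = j \/ (x i < x s /\ x s < x j) \/ (x s < x j /\ x j < x i)
                                 \/ (x j < x i /\ x i < x s).
  { move=> s /HSi [[E1 _]|[_ [_ [->|[->|[_ [_ Hts]]]]]]]; try tauto.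
    have [r [Hr Hinc]] := proj2 Hts x Hx H01.
    destruct r as [|[|[|r]]]; simpl in Hinc; try tauto. }
  pose z := fun v => if Rle_dec (x i) (x v) then x v else x v + 1.
  have Zle : forall v, x i <= x v -> z v = x v by move=> v H; rewrite /z; case: Rle_dec.
  have Zlt : forall v, x v < x i -> z v = x v + 1 by move=> v H; rewrite /z; case: Rle_dec => //= H'; lra.
  have Wz : forall v, x i <= z v < x i + 1.
  { move=> v. have := H01 v. have := H01 i. case: (Rle_lt_dec (x i) (x v)) => H.
    - rewrite Zle //; lra. - rewrite Zlt //; lra. }
  have Iz : forall v, is_int (z v - x v).
  { move=> v. case: (Rle_lt_dec (x i) (x v)) => H.
    - rewrite Zle //; apply is_int_eq with 0; [ring|apply is_int_0].
    - rewrite Zlt //; exists 1%Z; simpl; ring. }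
  have Hz : tchamber E om z := chamber_shift Hx Iz.
  have Hi01 := H01 i. have Hj01 := H01 j. have Ha01 := H01 a.
  apply (@collapse_key n E om S z (x i) (z j) a b Hz Wz).
  - case: Hxij => H; [rewrite (Zle j); lra|rewrite (Zlt j); lra].
  - have := Wz j; lra.
  - move=> s Hs. have Hs01 := H01 s.
    case: (HSx s Hs) => [->|[->|[[h1 h2]|[[h1 h2]|[h1 h2]]]]].
    + rewrite (Zle i); [|lra]. have := Wz j; lra.
    + lra.
    + rewrite (Zle s); [|lra]. rewrite (Zle j); lra.
    + rewrite (Zlt s); [|lra]. rewrite (Zlt j); lra.
    + rewrite (Zle s); [|lra]. rewrite (Zlt j); lra.
  - exact Ha.
  - case: Hxij => Hij'.
    + rewrite (Zle j); [|lra]. case: (Rle_lt_dec (x i) (x a)) => H.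
      * rewrite Zle //. case: (Rle_lt_dec (x j) (x a)) => H'; [right; lra|].
        left. apply NNPP => Hne. apply H0. lra.
      * rewrite Zlt //. right; lra.
    + rewrite (Zlt j); [|lra]. case: (Rle_lt_dec (x i) (x a)) => H.
      * rewrite Zle //. left. apply NNPP => Hne. apply H2. lra.
      * rewrite Zlt //. right. apply NNPP => Hne. apply H1. lra.
  - exact Hab.
Qed.
End Aux5.


Local Close Scope R_scope.
Unset Implicit Arguments.
Set Strict Implicit.
Theorem mainTheorem11 (n : nat) (E om : 'I_n -> 'I_n -> Prop)
  (HG : simple_graph E) (Hom : acyc_orient E om)
  (S : 'I_n -> Prop) (HSne : exists v, S v)
  (HS : (exists i j : 'I_n, forall k, S k <-> tinterval E om i j k)
        \/ geom_antichain E om S) :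
  tor_closed E om (piS S).
Proof.
  have key : forall a b, ~ S a -> a <> b ->
      exists X : pt n, in_closure E om X /\ Dtor (piS S) X /\ ~ is_int (X a - X b).
  { move=> a b Ha Hab. case: HS => [[i [j Hij]]|Hanti].
    - case: (eqVneq i j) => [Eij|/eqP Nij].
      + subst j. apply (antichain_key (S:=S)) => //.
        have [y Hy] := chamber_exists Hom. exists y; split => //.
        move=> u v [->|[Su Sv]]; first by apply is_int_eq with 0%R; [ring|apply is_int_0].
        have Hu : u = i by case: (proj1 (Hij u) Su) => [[_ ->]|[H _]].
        have Hv : v = i by case: (proj1 (Hij v) Sv) => [[_ ->]|[H _]].
        subst; apply is_int_eq with 0%R; [ring|apply is_int_0].
      + have Htc : tchain E om [:: i; j].
        { case: HSne => s /Hij [[E1 _]|[_ [Htc _]]] //. }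
        exact: (interval_key Hij Nij Htc Ha Hab).
    - exact: antichain_key. }
  move=> q [Hqr [Hqs Hqt]] Hcoarse Heq u v Hquv.
  apply NNPP => Hnp.
  have Huv : u <> v by move=> H; apply Hnp; left.
  case: (classic (S u)) => Su.
  - have Sv : ~ S v by move=> Sv; apply Hnp; right.
    have [X [HX1 [HX2 HX3]]] := key v u Sv (fun H => Huv (esym H)).
    apply HX3. have [_ HDq] := proj2 (Heq X) (conj HX1 HX2). apply HDq. by apply Hqs.
  - have [X [HX1 [HX2 HX3]]] := key u v Su Huv.
    apply HX3. have [_ HDq] := proj2 (Heq X) (conj HX1 HX2). by apply HDq.
Qed.
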